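(* Let $n$ robots, at most $f$ of them Byzantine, be placed at two distinct points $A<B$ of the real line: $p\ge 1$ robots at $A$ and $q \ge 1$ robots at $B$, with $p+q=n$. Suppose the robots run a deterministic cautious algorithm that solves Byzantine convergence with up to $f$ Byzantine robots in the ATOM model under a fully asynchronous scheduler. If $|p-q|\le f$, then: - when a correct robot at $A$ is activated, its computed destination lies in $(A,B]$; - when a correct robot at $B$ is activated, its computed destination lies in $[A,B)$.
   Context: Model: robots on the real line in the ATOM model (each activated robot performs a full Look–Compute–Move cycle atomically). Robots are anonymous (same deterministic program), oblivious, have no common orientation, and have unlimited visibility with strong multiplicity detection (an observation returns the multiset of all positions). Byzantine robots behave arbitrarily, with positions chosen by the adversary. A fully asynchronous scheduler only guarantees that each robot is activated infinitely often. Byzantine convergence: for every $\epsilon>0$ there is a time after which all correct robots are pairwise within distance $\epsilon$. Cautious algorithm: every computed destination of a correct robot lies in the range of the correct robots' positions in its last observation. In addition, whenever the correct robots are not colocated, some correct robot later has destination different from its position. *)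

(* Defs.v *)
From HB Require Import structures.
From mathcomp Require Import all_boot all_order all_algebra.
From mathcomp Require Import reals.
Set Implicit Arguments. Unset Strict Implicit. Unset Printing Implicit Defensive.
Import Order.TTheory GRing.Theory Num.Theory.
Local Open Scope ring_scope.

Section Robots.
Variables (R : realType) (n : nat).

Definition config := 'I_n -> R.

(* Orientation of a robot's local frame (no common orientation):
   true = same as the global one, false = flipped. *)
Definition orient (s : bool) : R := if s then 1 else -1.

(* Local observation of robot i with orientation s: the multiset of all
   robot positions (correct and Byzantine, with multiplicities), expressed
   in i's local frame (origin at i, orientation s). The multiset is
   represented canonically as a sorted list. *)
Definition view (c : config) (i : 'I_n) (s : bool) : seq R :=
  sort <=%R [seq orient s * (c j - c i) | j <- enum 'I_n].

(* Deterministic, oblivious, anonymous algorithm: a map from local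
   observations to a local destination. *)
Definition algorithm := seq R -> R.

Definition dest (alg : algorithm) (c : config) (i : 'I_n) (s : bool) : R :=
  c i + orient s * alg (view c i s).

(* ATOM executions under a fully asynchronous (fair) scheduler.
   pos t = configuration at time t, act t = robots activated at round t
   (each performs an atomic Look-Compute-Move cycle on pos t),
   sg t i = orientation of robot i's frame at round t (adversarial).
   Byzantine robots (Byz) have arbitrary, adversary-chosen positions. *)
Definition execution (alg : algorithm) (Byz : {set 'I_n})
    (pos : nat -> config) (act : nat -> {set 'I_n})
    (sg : nat -> 'I_n -> bool) : Prop :=
  (forall t i, i \notin Byz ->
     pos t.+1 i = if i \in act t then dest alg (pos t) i (sg t i) else pos t i)
  /\ (forall i t, exists t', (t <= t')%N /\ i \in act t').

Definition converges (Byz : {set 'I_n}) (pos : nat -> config) : Prop :=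
  forall eps : R, 0 < eps -> exists T : nat, forall t : nat, (T <= t)%N ->
    forall i j, i \notin Byz -> j \notin Byz -> `|pos t i - pos t j| <= eps.

Definition solves_byz_convergence (alg : algorithm) (f : nat) : Prop :=
  forall (Byz : {set 'I_n}), (#|Byz| <= f)%N ->
  forall pos act sg, execution alg Byz pos act sg -> converges Byz pos.

Definition cautious (alg : algorithm) (f : nat) : Prop :=
  forall (Byz : {set 'I_n}), (#|Byz| <= f)%N ->
  forall pos act sg, execution alg Byz pos act sg ->
  (forall t i, i \notin Byz -> i \in act t ->
     exists j k, [/\ j \notin Byz, k \notin Byz &
       pos t j <= dest alg (pos t) i (sg t i) <= pos t k])
  /\ (forall t, (exists j k, [/\ j \notin Byz, k \notin Byz & pos t j != pos t k]) ->
       exists t' i, [/\ (t <= t')%N, i \notin Byz, i \in act t' &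
         dest alg (pos t') i (sg t' i) != pos t' i]).

End Robots.

(* Main.v *)
Require Import Defs.
From HB Require Import structures.
From mathcomp Require Import all_boot all_order all_algebra.
From mathcomp Require Import reals.
From mathcomp Require Import zify lra.
Import Order.TTheory GRing.Theory Num.Theory.
Local Open Scope ring_scope.

Lemma card_count (n : nat) (P : pred 'I_n) :
  #|[set j | P j]| = count P (enum 'I_n).
Proof.
rewrite cardE enumT /enum_mem size_filter; apply: eq_count => j.
by rewrite /= inE.
Qed.

Lemma map_cstin (T : Type) (s : seq nat) (f : nat -> T) (x : T) :
  (forall k, k \in s -> f k = x) -> map f s = nseq (size s) x.
Proof.
elim: s => [//|k s IH] H /=; rewrite H ?mem_head // IH // => j Hj.
by apply: H; rewrite in_cons Hj orbT.
Qed.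

Lemma map_thresh (T : Type) (n P : nat) (x y : T) (h : 'I_n -> T) :
  (P <= n)%N -> (forall j : 'I_n, h j = if (j < P)%N then x else y) ->
  map h (enum 'I_n) = nseq P x ++ nseq (n - P) y.
Proof.
move=> Hp H; rewrite (eq_map H).
have -> : (fun j : 'I_n => if (j < P)%N then x else y) =
  (fun k : nat => if (k < P)%N then x else y) \o val by [].
rewrite map_comp val_enum_ord.
have -> : n = (P + (n - P))%N by lia.
rewrite iotaD map_cat add0n; congr (_ ++ _).
  rewrite -[in RHS](size_iota 0 P); apply: map_cstin => k.
  by rewrite mem_iota add0n => /andP[_ ->].
have -> : (P + (n - P) - P = n - P)%N by lia.
rewrite -[in RHS](size_iota P (n - P)); apply: map_cstin => k.
rewrite mem_iota => /andP[Hk _]; by rewrite ltnNge Hk.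
Qed.

Lemma orientN (R : realType) (s : bool) : orient R (~~ s) = - orient R s.
Proof. by case: s; rewrite /orient /= ?opprK. Qed.

Lemma viewT (R : realType) (n : nat) (c : config R n) (i : 'I_n) (s : bool)
  (P : nat) (x y : R) :
  (P <= n)%N -> (forall j : 'I_n, orient R s * (c j - c i) = if (j < P)%N then x else y) ->
  view c i s = sort <=%R (nseq P x ++ nseq (n - P) y).
Proof.
move=> Hp H; rewrite /view.
by rewrite (@map_thresh _ n P x y (fun j => orient R s * (c j - c i)) Hp H).
Qed.

Lemma count_iota_int (m M n : nat) : (m <= M)%N -> (M <= n)%N ->
  count (fun k => (m <= k < M)%N) (iota 0 n) = (M - m)%N.
Proof.
move=> H1 H2.
have -> : n = (m + ((M - m) + (n - M)))%N by lia.
rewrite !iotaD !count_cat add0n.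
rewrite (@eq_in_count _ _ pred0 (iota 0 m)); last first.
  move=> k; rewrite mem_iota add0n => /andP[_ Hk].
  by case: (leqP m k) => //=; lia.
rewrite (@eq_in_count _ _ predT (iota m (M - m))); last first.
  move=> k; rewrite mem_iota => /andP[Hk1 Hk2] /=.
  apply/andP; split => //; lia.
rewrite (@eq_in_count _ _ pred0 (iota (m + (M - m)) (n - M))); last first.
  move=> k; rewrite mem_iota => /andP[Hk1 Hk2] /=.
  by case: (ltnP k M) => /=; [lia| rewrite andbF].
by rewrite !count_pred0 count_predT size_iota addn0.
Qed.

Lemma core (R : realType) (n f : nat) (alg : algorithm R) (a b : R) (P Q : nat) (s : bool) :
  solves_byz_convergence n alg f -> a != b -> (0 < P)%N -> (0 < Q)%N ->
  (P + Q)%N = n -> (P - Q <= f)%N -> (Q - P <= f)%N ->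
  alg (sort <=%R (nseq P 0 ++ nseq Q (orient R s * (b - a)))) = 0 -> False.
Proof.
move=> Hsol Hab HP HQ Hn HPQ HQP Halg.
set m := minn P Q; set M := maxn P Q.
have Hm : (0 < m)%N by rewrite /m; lia.
have HmM : (m <= M)%N by rewrite /m /M; lia.
have HMn : (M < n)%N by rewrite /M; lia.
have HmP : (m <= P)%N by rewrite /m; lia.
have HmQ : (m <= Q)%N by rewrite /m; lia.
have HPM : (P <= M)%N by rewrite /M; lia.
have HQM : (Q <= M)%N by rewrite /M; lia.
pose X : config R n := fun j => if (j < P)%N then a else b.
pose Y : config R n := fun j => if (j < Q)%N then a else b.
pose pos (t : nat) := if odd t then Y else X.
pose Byz := [set j : 'I_n | (m <= j < M)%N].
pose act (t : nat) := if odd t then [set j : 'I_n | (m <= j)%N] else [set j : 'I_n | (j < m)%N].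
pose sg (t : nat) (j : 'I_n) := if odd t then ~~ s else s.
have HB : (#|Byz| <= f)%N.
  rewrite card_count.
  have -> : count (fun j : 'I_n => (m <= j < M)%N) (enum 'I_n) =
            count (fun k => (m <= k < M)%N) (map val (enum 'I_n)) by rewrite count_map.
  rewrite val_enum_ord count_iota_int //; last by apply: ltnW.
  rewrite /M /m; lia.
set v := orient R s * (b - a).
have HvX : forall i : 'I_n, (i < P)%N -> view X i s = sort <=%R (nseq P 0 ++ nseq Q v).
  move=> i Hi; rewrite (@viewT _ _ X i s P 0 v); last 2 first.
  - lia.
  - move=> j; rewrite /X Hi; case: (j < P)%N; by rewrite ?subrr ?mulr0.
  by have -> : (n - P = Q)%N by lia.
have HvY : forall i : 'I_n, (Q <= i)%N -> view Y i (~~ s) = sort <=%R (nseq P 0 ++ nseq Q v).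
  move=> i Hi; rewrite (@viewT _ _ Y i (~~ s) Q v 0); last 2 first.
  - lia.
  - move=> j; rewrite /Y; have -> : (i < Q)%N = false by lia.
    case: (j < Q)%N; rewrite ?subrr ?mulr0 //.
    by rewrite orientN /v mulNr -mulrN opprB.
  have -> : (n - Q = P)%N by lia.
  by apply/perm_sort_leP; rewrite perm_catC.
have Hex : execution alg Byz pos act sg.
  split.
  - move=> t i Hi; rewrite /pos /act /sg /=.
    have Hi' : (i < m)%N \/ (M <= i)%N.
      move: Hi; rewrite inE negb_and -!ltnNge => /orP[]; [left|right] => //; lia.
    case: (odd t) => /=; rewrite inE.
    + case: Hi' => Hi'.
      * have -> : (m <= i)%N = false by lia.
        rewrite /X /Y (_ : (i < P)%N = true); last lia.
        by rewrite (_ : (i < Q)%N = true); last lia.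
      * have -> : (m <= i)%N = true by lia.
        rewrite /dest HvY ?Halg ?mulr0 ?addr0; last by lia.
        rewrite /X /Y (_ : (i < P)%N = false); last lia.
        by rewrite (_ : (i < Q)%N = false); last lia.
    + case: Hi' => Hi'.
      * rewrite Hi' /dest HvX ?Halg ?mulr0 ?addr0; last by lia.
        rewrite /X /Y (_ : (i < P)%N = true); last lia.
        by rewrite (_ : (i < Q)%N = true); last lia.
      * have -> : (i < m)%N = false by lia.
        rewrite /X /Y (_ : (i < P)%N = false); last lia.
        by rewrite (_ : (i < Q)%N = false); last lia.
  - move=> i t; case: (ltnP i m) => Him.
    + exists (2 * t)%N; split; first lia.
      by rewrite /act oddM /= inE.
    + exists (2 * t).+1; split; first lia.
      by rewrite /act /= oddM /= inE.
have Hc := Hsol Byz HB pos act sg Hex.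
have Hpos : 0 < `|a - b| by rewrite normr_gt0 subr_eq0.
have [T HT] := Hc (`|a - b| / 2) ltac:(lra).
have H0 : (0 < n)%N by lia.
have H1 : (n.-1 < n)%N by lia.
have := HT T (leqnn T) (Ordinal H0) (Ordinal H1).
rewrite !inE /= /pos.
have -> : (m <= 0)%N = false by lia.
have -> : (m <= n.-1 < M)%N = false by apply/negbTE; rewrite negb_and -ltnNge; apply/orP; right; lia.
have E : (0 < P)%N && (0 < Q)%N && ~~ (n.-1 < P)%N && ~~ (n.-1 < Q)%N by apply/andP; split; [apply/andP; split; [apply/andP; split|]|]; rewrite ?ltnNge ?negbK //; lia.
move: E => /andP[/andP[/andP[E1 E2] E3] E4].
move=> /(_ isT isT).
case: (odd T); rewrite /X /Y /= ?E1 ?E2 ?(negbTE E3) ?(negbTE E4); lra.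
Qed.

Lemma count_and (n : nat) (c : 'I_n -> bool) (b : bool) :
  count (fun j => c j && b) (enum 'I_n) = (b * #|[set j | c j]|)%N.
Proof.
rewrite card_count; case: b.
  by rewrite mul1n; apply: eq_count => j; rewrite andbT.
by rewrite mul0n (@eq_count _ _ pred0) ?count_pred0 // => j; rewrite andbF.
Qed.

Lemma view2 (R : realType) (n : nat) (c : config R n) (i : 'I_n) (s : bool)
  (a b : R) (p q : nat) :
  a != b -> c i = a -> (forall j, c j = a \/ c j = b) ->
  #|[set j | c j == a]| = p -> #|[set j | c j == b]| = q ->
  view c i s = sort <=%R (nseq p 0 ++ nseq q (orient R s * (b - a))).
Proof.
move=> Hab Hi Hall Hp Hq; rewrite /view Hi; apply/perm_sort_leP/permP => pr.
rewrite count_map count_cat !count_nseq.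
pose a1 := fun j : 'I_n => (c j == a) && pr 0.
pose a2 := fun j : 'I_n => (c j == b) && pr (orient R s * (b - a)).
have := count_predUI a1 a2 (enum 'I_n).
rewrite (@eq_count _ (predI a1 a2) pred0); last first.
  move=> j; rewrite /a1 /a2 /=.
  case Ej: (c j == a) => //=; move/eqP: Ej => ->.
  by rewrite (negbTE Hab) /= andbF.
rewrite count_pred0 addn0 => E.
rewrite (@eq_count _ _ (predU a1 a2)); last first.
  move=> j; rewrite /a1 /a2 /=.
  case: (Hall j) => ->; rewrite ?eqxx ?subrr ?mulr0 /=.
    by rewrite (negbTE Hab) /= orbF.
  by rewrite [b == a]eq_sym (negbTE Hab).
by rewrite E /a1 /a2 !count_and Hp Hq.
Qed.

Lemma orient_neq0 (R : realType) (s : bool) : orient R s != 0.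
Proof. by case: s; rewrite /orient ?oppr_eq0 oner_neq0. Qed.

Theorem lemma5 (R : realType) (n f : nat) (alg : algorithm R) :
  cautious n alg f -> solves_byz_convergence n alg f ->
  forall (A B : R) (p q : nat), A < B -> (1 <= p)%N -> (1 <= q)%N ->
  (p + q)%N = n -> (p - q <= f)%N -> (q - p <= f)%N ->
  forall (Byz : {set 'I_n}), (#|Byz| <= f)%N ->
  forall pos act sg, execution alg Byz pos act sg ->
  forall t : nat,
    #|[set i | pos t i == A]| = p -> #|[set i | pos t i == B]| = q ->
    (forall i, pos t i = A \/ pos t i = B) ->
  forall i, i \notin Byz -> i \in act t ->
    (pos t i = A -> A < dest alg (pos t) i (sg t i) <= B) /\
    (pos t i = B -> A <= dest alg (pos t) i (sg t i) < B).
Proof.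
move=> Hcaut Hsol A B p q HAB Hp Hq Hn Hpq Hqp Byz HByz pos act sg Hex t Hcp Hcq Hall i Hi Hact.
have [H1 _] := Hcaut Byz HByz pos act sg Hex.
have [j [k [_ _ /andP[Hj Hk]]]] := H1 t i Hi Hact.
have Hlo : A <= dest alg (pos t) i (sg t i).
  apply: le_trans Hj; case: (Hall j) => ->; lra.
have Hhi : dest alg (pos t) i (sg t i) <= B.
  apply: (le_trans Hk); case: (Hall k) => ->; lra.
have HAB' : A != B by rewrite lt_eqF.
have Hzero : forall x, dest alg (pos t) i (sg t i) = x -> pos t i = x ->
    alg (view (pos t) i (sg t i)) = 0.
  move=> x; rewrite /dest => E Ex; move: E; rewrite Ex => /eqP.
  rewrite -subr_eq0 addrC addKr mulf_eq0 (negbTE (orient_neq0 _ _)) /=.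
  by move/eqP.
split => HiP.
- rewrite Hhi andbT lt_neqAle Hlo andbT; apply/eqP => Hd.
  have Hz := Hzero A (esym Hd) HiP.
  rewrite (@view2 R n (pos t) i (sg t i) A B p q HAB' HiP Hall Hcp Hcq) in Hz.
  by apply: (@core _ _ _ _ _ _ _ _ _ Hsol HAB' Hp Hq Hn Hpq Hqp Hz).
- rewrite Hlo /= lt_neqAle Hhi andbT; apply/eqP => Hd.
  have HBA' : B != A by rewrite eq_sym.
  have Hall' : forall j, pos t j = B \/ pos t j = A.
    by move=> j'; case: (Hall j'); [right|left].
  have Hz := Hzero B Hd HiP.
  rewrite (@view2 R n (pos t) i (sg t i) B A q p HBA' HiP Hall' Hcq Hcp) in Hz.
  have Hn' : (q + p)%N = n by lia.
  by apply: (@core _ _ _ _ _ _ _ _ _ Hsol HBA' Hq Hp Hn' Hqp Hpq Hz).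
Qed.
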